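(* For any $k\geq1$, $n\geq0$ and $\ell\geq0$, the number of $k$-packed matrices of size $n$ with exactly $\ell$ nonzero entries is $$\#\mathcal{P}_{k,n,\ell}=\sum_{0\leq i,j\leq n}(-1)^{i+j}\binom{n}{i}\binom{n}{j}\binom{ij}{\ell}k^{\ell}.$$
   Context: $A_k=\{0,1,\dots,k\}$. A $k$-packed matrix of size $n$ is an $n\times n$ matrix with entries in $A_k$ such that each row and each column contains at least one nonzero entry (the empty matrix is the unique one of size $0$). $\mathcal{P}_{k,n,\ell}$ is the set of $k$-packed matrices of size $n$ with exactly $\ell$ nonzero entries. Binomial coefficients $\binom{m}{\ell}$ are $0$ when $\ell>m$, and $\binom{0}{0}=1$. *)

(* Defs.v *)
From mathcomp Require Import all_boot all_order all_algebra.
Set Implicit Arguments. Unset Strict Implicit. Unset Printing Implicit Defensive.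

(* A_k = {0,...,k} is represented by the ordinal type 'I_k.+1.
   An n x n matrix with entries in A_k is an element of 'M['I_k.+1]_n. *)

Definition nonzero_entry (k : nat) (a : 'I_k.+1) : bool := val a != 0%N.

Definition packed (k n : nat) (M : 'M['I_k.+1]_n) : bool :=
  [forall i : 'I_n, exists j : 'I_n, nonzero_entry (M i j)] &&
  [forall j : 'I_n, exists i : 'I_n, nonzero_entry (M i j)].

Definition nnz (k n : nat) (M : 'M['I_k.+1]_n) : nat :=
  #|[set ij : 'I_n * 'I_n | nonzero_entry (M ij.1 ij.2)]|.

Definition Pset (k n l : nat) : {set 'M['I_k.+1]_n} :=
  [set M | packed M && (nnz M == l)].

(* Main.v *)
Require Import Defs.
From mathcomp Require Import all_boot all_order all_algebra.
From mathcomp Require Import ring zify.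
Import GRing.Theory.
Set Implicit Arguments. Unset Strict Implicit.
Local Open Scope ring_scope.
Lemma nzE k (a : 'I_k.+1) : nonzero_entry a = (a != ord0).
Proof. by rewrite /nonzero_entry -(inj_eq val_inj). Qed.

Section Count.
Variables (T : finType) (k : nat).
Definition supp (f : {ffun T -> 'I_k.+1}) : {set T} := [set x | nonzero_entry (f x)].

Lemma card_supp_eq (U : {set T}) :
  #|[set f | supp f == U]| = (k ^ #|U|)%N.
Proof.
have -> : [set f | supp f == U] = [set f in pffun_on ord0 U [pred a : 'I_k.+1 | a != ord0]].
  apply/setP => f; rewrite !inE; apply/eqP/pffun_onP => [<- | [Hs Hi]].
    split; first by apply/subsetP => x; rewrite !inE nzE.
    by move=> y /imageP[x]; rewrite inE nzE => Hx ->.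
  apply/setP => x; rewrite inE nzE; apply/idP/idP => [Hx|Hx].
    by apply: (subsetP Hs); rewrite inE.
  by have := Hi (f x) (image_f f Hx).
rewrite cardsE card_pffun_on; congr (_ ^ _)%N.
have := cardC [pred a : 'I_k.+1 | a != ord0].
rewrite card_ord.
have -> : #|[predC [pred a : 'I_k.+1 | a != ord0]]| = 1%N.
  by rewrite -(card1 (@ord0 k)); apply: eq_card => a; rewrite !inE negbK.
by rewrite addn1 => -[].
Qed.

Lemma card_supp_sub (S : {set T}) l :
  #|[set f | (#|supp f| == l) && (supp f \subset S)]| = ('C(#|S|, l) * k ^ l)%N.
Proof.
rewrite -cards_draws -sum1_card.
rewrite (partition_big supp [pred U : {set T} | (U \subset S) && (#|U| == l)]) /=; last first.
  by move=> f; rewrite inE andbC.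
rewrite -sum_nat_cond_const.
apply: eq_bigr => U /andP[HUS /eqP <-].
rewrite sum1_card -card_supp_eq; apply: eq_card => f; rewrite !inE.
rewrite -topredE /= !inE.
by case: (supp f =P U) => [->|]; rewrite ?eqxx ?HUS ?andbF.
Qed.

End Count.
Section Mx.
Variables (k n : nat).
Definition toF (M : 'M['I_k.+1]_n) : {ffun 'I_n * 'I_n -> 'I_k.+1} := [ffun ij => M ij.1 ij.2].
Definition ofF (f : {ffun 'I_n * 'I_n -> 'I_k.+1}) : 'M['I_k.+1]_n := \matrix_(i, j) f (i, j).
Lemma toFK : cancel toF ofF.
Proof. by move=> M; apply/matrixP => i j; rewrite mxE ffunE. Qed.
Lemma ofFK : cancel ofF toF.
Proof. by move=> f; apply/ffunP => -[i j]; rewrite ffunE mxE. Qed.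

Definition Z (A B : {set 'I_n}) (M : 'M['I_k.+1]_n) : bool :=
  [forall i in A, forall j, ~~ nonzero_entry (M i j)] &&
  [forall j in B, forall i, ~~ nonzero_entry (M i j)].

Lemma nnzE M : nnz M = #|supp (toF M)|.
Proof. by rewrite /nnz; apply: eq_card => ij; rewrite !inE ffunE. Qed.

Lemma ZE A B M : Z A B M = (supp (toF M) \subset setX (~: A) (~: B)).
Proof.
apply/andP/subsetP => [[/forall_inP HA /forall_inP HB] [i j]|H].
  rewrite !inE ffunE /= => Hnz; apply/andP; split.
    by apply/negP => /HA /forallP /(_ j); rewrite Hnz.
  by apply/negP => /HB /forallP /(_ i); rewrite Hnz.
split.
  apply/forall_inP => i Hi; apply/forallP => j; apply/negP => Hnz.
  have := H (i, j); rewrite !inE ffunE Hi /=; by move/(_ Hnz).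
apply/forall_inP => j Hj; apply/forallP => i; apply/negP => Hnz.
have := H (i, j); rewrite !inE ffunE Hj /= andbF; by move/(_ Hnz).
Qed.

Lemma count_mx A B l :
  #|[set M : 'M['I_k.+1]_n | (nnz M == l) && Z A B M]| = ('C(#|~: A| * #|~: B|, l) * k ^ l)%N.
Proof.
rewrite -cardsX -card_supp_sub -(card_imset _ (can_inj toFK)); apply: eq_card => f.
rewrite [RHS]inE; apply/imsetP/idP => [[M HM ->]|Hf].
  by move: HM; rewrite inE nnzE ZE.
by exists (ofF f); rewrite ?ofFK // inE nnzE ZE ofFK.
Qed.
End Mx.
Lemma forall_expand (T : finType) (z : T -> bool) :
  (([forall i, ~~ z i] : nat)%:R : int) =
  \sum_(A : {set T}) (-1) ^+ #|A| * (([forall i in A, z i] : nat)%:R).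
Proof.
have -> : (([forall i, ~~ z i] : nat)%:R : int) = \prod_i (- (z i : nat)%:R + 1).
  case: (boolP [forall i, ~~ z i]) => [/forallP H | /forallPn [i]].
    by rewrite big1 // => i _; rewrite (negPf (H i)) oppr0 add0r.
  rewrite negbK => Hi; rewrite (bigD1 i) //= Hi addNr mul0r //.
rewrite bigA_distr; apply: eq_bigr => A _.
rewrite -big_mkcond /= prodrN; congr (_ * _).
case: (boolP [forall i in A, z i]) => [/forall_inP H | /forall_inPn [i Hi /negPf Hz]].
  by rewrite big1 // => i /H ->.
by rewrite (bigD1 i) //= Hz mul0r.
Qed.

Lemma packed_expand k n (M : 'M['I_k.+1]_n) :
  ((packed M : nat)%:R : int) =
  \sum_(A : {set 'I_n}) \sum_(B : {set 'I_n}) (-1) ^+ (#|A| + #|B|) * ((Z A B M : nat)%:R).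
Proof.
have E1 : [forall i, exists j, nonzero_entry (M i j)] = [forall i, ~~ [forall j, ~~ nonzero_entry (M i j)]].
  by apply: eq_forallb => i; rewrite negb_forall; apply: eq_existsb => j; rewrite negbK.
have E2 : [forall j, exists i, nonzero_entry (M i j)] = [forall j, ~~ [forall i, ~~ nonzero_entry (M i j)]].
  by apply: eq_forallb => j; rewrite negb_forall; apply: eq_existsb => i; rewrite negbK.
rewrite /packed E1 E2 -mulnb natrM !forall_expand big_distrl; apply: eq_bigr => A _.
rewrite big_distrr; apply: eq_bigr => B _.
by rewrite /Z -mulnb natrM exprD mulrACA.
Qed.

Lemma cardsum (T : finType) (P : pred T) :
  ((#|[set x | P x]|)%:R : int) = \sum_x ((P x : nat)%:R).
Proof.
rewrite -natr_sum; congr _%:R; rewrite -sum1dep_card big_mkcond.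
by apply: eq_bigr => x _; case: (P x).
Qed.

Lemma group_card n (F : nat -> int) (G : {set 'I_n} -> int) :
  (forall A, G A = F #|A|) ->
  \sum_(A : {set 'I_n}) G A = \sum_(0 <= i < n.+1) ('C(n, i))%:R * F i.
Proof.
move=> HG.
transitivity (\sum_(A : {set 'I_n}) \sum_(0 <= i < n.+1) ((#|A| == i) : nat)%:R * F i).
  apply: eq_bigr => A _; rewrite HG (bigD1_seq #|A|) /=.
  - rewrite eqxx mul1r big1 ?addr0 // => i; rewrite eq_sym => /negPf ->.
    by rewrite mul0r.
  - by rewrite mem_index_iota /= ltnS; apply: leq_trans (max_card _) _; rewrite card_ord.
  - exact: (iota_uniq 0 n.+1).
rewrite (@exchange_big int 0 +%R) /=; apply: eq_bigr => i _; rewrite -big_distrl /= -natr_sum.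
congr (_%:R * _).
rewrite -[n in 'C(n, _)]card_ord -card_draws -sum1dep_card.
rewrite [RHS]big_mkcond /=. by apply: eq_bigr => A _; case: (_ == _).
Qed.

Lemma sign_lem n i j : (i <= n)%N -> (j <= n)%N ->
  (-1) ^+ ((n - i) + (n - j)) = (-1) ^+ (i + j) :> int.
Proof.
move=> Hi Hj; rewrite -signr_odd -[RHS]signr_odd; congr (_ ^+ (nat_of_bool _)).
rewrite !oddD !oddB //.
by case: (odd n); case: (odd i); case: (odd j).
Qed.

Lemma cardC_ord n (A : {set 'I_n}) : #|~: A| = (n - #|A|)%N.
Proof. have := cardsC A; rewrite card_ord => H; lia. Qed.

Theorem proposition1p2 (k n l : nat) (hk : (1 <= k)%N) :
  (#|Pset k n l|%:Z =
   \sum_(0 <= i < n.+1) \sum_(0 <= j < n.+1)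
      (-1) ^+ (i + j) * ('C(n, i) * 'C(n, j) * 'C(i * j, l) * k ^ l)%N%:Z)%R.
Proof.
rewrite -natz /Pset cardsum.
under eq_bigr => M _ do rewrite -mulnb natrM packed_expand big_distrl /=.
rewrite exchange_big /=.
transitivity (\sum_(A : {set 'I_n}) \sum_(B : {set 'I_n})
   (-1) ^+ (#|A| + #|B|) * (('C(#|~: A| * #|~: B|, l) * k ^ l)%N)%:R : int).
  apply: eq_bigr => A _.
  under eq_bigr => M _ do rewrite big_distrl /=.
  rewrite exchange_big /=; apply: eq_bigr => B _.
  rewrite -(@count_mx k n A B l) cardsum big_distrr /=; apply: eq_bigr => M _.
  by rewrite -mulrA -natrM mulnb andbC.
rewrite (reindex_inj (@setC_inj _)) /=.
under eq_bigr => A _ do rewrite (reindex_inj (@setC_inj _)) /=.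
rewrite (@group_card n (fun a => \sum_(0 <= j < n.+1) ('C(n, j))%:R *
   ((-1) ^+ ((n - a) + (n - j)) * (('C(a * j, l) * k ^ l)%N)%:R : int))); last first.
  move=> A; apply: group_card => B; by rewrite !setCK !cardC_ord.
apply: eq_big_nat => i /andP[_ Hi]; rewrite big_distrr /=.
apply: eq_big_nat => j /andP[_ Hj]; rewrite sign_lem // -!natz !natrM.
ring.
Qed.
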